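(* Consider $n$ agents $\mathcal{V}=\{1,\dots,n\}$ with Lagrangian dynamics $M_i(q_i)\ddot q_i+C_i(q_i,\dot q_i)\dot q_i=\tau_i$, $q_i\in\mathbb{R}^m$, with $M_i(q_i)$ symmetric positive definite. Let $\mathcal{X}_1,\dots,\mathcal{X}_n\subseteq\mathbb{R}^m$ be closed convex sets with $\mathcal{X}_0=\bigcap_{i}\mathcal{X}_i$ nonempty and bounded. Let $\sigma:[t_0,\infty)\to\mathcal{P}$ be a piecewise constant switching signal taking values in a finite set $\mathcal{P}$ of undirected graphs on $\mathcal{V}$, with switching times $t_0<t_1<t_2<\dots$ satisfying $\inf_l(t_{l+1}-t_l)\ge\tau_d>0$; let $\mathcal{N}_i(\sigma(t))$ be the neighbor set of $i$ in $\mathcal{G}_{\sigma(t)}$. Let $a_{ij}(t)=a_{ji}(t)$ be continuous weights with $a_*\le a_{ij}(t)\le a^*$ for all $i,j$ and all $t\ge0$, where $a_*,a^*>0$ are constants. Apply the control $$\tau_i=C_i(q_i,\dot q_i)\dot q_i-kM_i(q_i)\dot q_i-M_i(q_i)(q_i-P_{\mathcal{X}_i}(q_i))-M_i(q_i)\sum_{j\in\mathcal{N}_i(\sigma(t))}a_{ij}(t)(q_i-q_j),$$ so that the closed loop is $\ddot q_i=-k\dot q_i-\sum_{j\in\mathcal{N}_i(\sigma(t))}a_{ij}(t)(q_i-q_j)-(q_i-P_{\mathcal{X}_i}(q_i))$. Then for all sufficiently large $k>0$, every solution satisfies $\lim_{t\to\infty}\|q_i(t)\|_{\mathcal{X}_i}=0$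 and $\lim_{t\to\infty}\dot q_i(t)=0$ for all $i\in\mathcal{V}$.
   Context: $\|\cdot\|$ is the Euclidean norm, $\|x\|_{\mathcal{S}}=\inf_{y\in\mathcal{S}}\|x-y\|$, and $P_{\mathcal{S}}(x)$ is the Euclidean projection of $x$ onto a closed convex set $\mathcal{S}$. *)

(* Defs.v *)
From HB Require Import structures.
From mathcomp Require Import all_boot all_order all_algebra.
From mathcomp Require Import all_classical all_reals all_analysis.
Set Implicit Arguments. Unset Strict Implicit. Unset Printing Implicit Defensive.
Import Order.TTheory GRing.Theory Num.Theory.
Import numFieldNormedType.Exports.
Local Open Scope classical_set_scope.
Local Open Scope ring_scope.

Definition enorm (R : realType) (m : nat) (x : 'cV[R]_m) : R :=
  Num.sqrt (\sum_(j < m) x j 0 ^+ 2).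

Definition setdist (R : realType) (m : nat) (S : set 'cV[R]_m) (x : 'cV[R]_m) : R :=
  inf [set enorm (x - y) | y in S].

Definition is_proj (R : realType) (m : nat) (S : set 'cV[R]_m) (x p : 'cV[R]_m) : Prop :=
  S p /\ forall y, S y -> enorm (x - p) <= enorm (x - y).

(* P_S(x): the (unique, for S nonempty closed convex) Euclidean projection *)
Definition proj (R : realType) (m : nat) (S : set 'cV[R]_m) (x : 'cV[R]_m) : 'cV[R]_m :=
  xget x [set p | is_proj S x p].

Definition convex_cv (R : realType) (m : nat) (S : set 'cV[R]_m) : Prop :=
  forall x y (l : R), S x -> S y -> 0 <= l -> l <= 1 ->
    S (l *: x + (1 - l) *: y).

Definition ebounded (R : realType) (m : nat) (S : set 'cV[R]_m) : Prop :=
  exists r : R, forall x, S x -> enorm x <= r.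

Definition sym_posdef (R : realType) (m : nat) (A : 'M[R]_m) : Prop :=
  A^T = A /\ forall x : 'cV[R]_m, x != 0 -> 0 < (x^T *m A *m x) 0 0.

Definition graph (n : nat) := {set 'I_n * 'I_n}.

Definition undirected (n : nat) (G : graph n) : Prop :=
  (forall i j, ((i, j) \in G) = ((j, i) \in G)) /\ (forall i, (i, i) \notin G).

Definition neighbors (n : nat) (G : graph n) (i : 'I_n) : {set 'I_n} :=
  [set j | (i, j) \in G].

Definition switching_signal (R : realType) (n : nat) (P : {set graph n})
    (sigma : R -> graph n) (t0 taud : R) (ts : nat -> R) : Prop :=
  [/\ ts 0%N = t0,
      forall l, ts l < ts l.+1,
      forall l, taud <= ts l.+1 - ts l,
      forall l t, ts l <= t -> t < ts l.+1 -> sigma t = sigma (ts l)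
    & forall t, t0 <= t -> sigma t \in P].

Definition control (R : realType) (n m : nat)
    (M : 'I_n -> 'cV[R]_m -> 'M[R]_m) (C : 'I_n -> 'cV[R]_m -> 'cV[R]_m -> 'M[R]_m)
    (X : 'I_n -> set 'cV[R]_m) (sigma : R -> graph n) (a : 'I_n -> 'I_n -> R -> R)
    (k : R) (q qd : 'I_n -> R -> 'cV[R]_m) (i : 'I_n) (t : R) : 'cV[R]_m :=
  C i (q i t) (qd i t) *m qd i t
  - k *: (M i (q i t) *m qd i t)
  - M i (q i t) *m (q i t - proj (X i) (q i t))
  - M i (q i t) *m (\sum_(j in neighbors (sigma t) i) a i j t *: (q i t - q j t)).

(* Main.v *)
Require Import Defs.
From HB Require Import structures.
From mathcomp Require Import all_boot all_order all_algebra.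
From mathcomp Require Import all_classical all_reals all_analysis.
From mathcomp Require Import ring lra.
Import Order.TTheory GRing.Theory Num.Theory.
Import numFieldNormedType.Exports.
Local Open Scope classical_set_scope.
Local Open Scope ring_scope.
Set Implicit Arguments. Unset Strict Implicit. Unset Printing Implicit Defensive.
Definition sq (R : realType) (m : nat) (x : 'cV[R]_m) : R := \sum_(j < m) x j 0 ^+ 2.
Definition dot (R : realType) (m : nat) (x y : 'cV[R]_m) : R := \sum_(j < m) x j 0 * y j 0.

Lemma sq_ge0 (R : realType) (m : nat) (x : 'cV[R]_m) : 0 <= sq x.
Proof. by apply: sumr_ge0 => j _; exact: sqr_ge0. Qed.

Lemma enormE (R : realType) (m : nat) (x : 'cV[R]_m) : enorm x = Num.sqrt (sq x).
Proof. by []. Qed.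

Lemma enorm_ge0 (R : realType) (m : nat) (x : 'cV[R]_m) : 0 <= enorm x.
Proof. exact: sqrtr_ge0. Qed.

Lemma enorm_sq (R : realType) (m : nat) (x : 'cV[R]_m) : enorm x ^+ 2 = sq x.
Proof. by rewrite enormE sqr_sqrtr // sq_ge0. Qed.

Lemma sq_add (R : realType) (m : nat) (x y : 'cV[R]_m) :
  sq (x + y) = sq x + 2 * dot x y + sq y.
Proof.
rewrite /sq /dot mulr_sumr -!big_split /=; apply: eq_bigr => j _.
by rewrite !mxE; ring.
Qed.

Lemma sq_scale_add (R : realType) (m : nat) (x y : 'cV[R]_m) (t : R) :
  sq (x + t *: y) = sq x + 2 * t * dot x y + t ^+ 2 * sq y.
Proof.
rewrite /sq /dot !mulr_sumr -!big_split /=; apply: eq_bigr => j _.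
by rewrite !mxE; ring.
Qed.

Lemma sq_eq0 (R : realType) (m : nat) (y : 'cV[R]_m) : sq y = 0 -> forall j, y j 0 = 0.
Proof.
move=> /eqP; rewrite psumr_eq0; last by move=> j _; exact: sqr_ge0.
by move=> /allP H j; apply/eqP; rewrite -sqrf_eq0; apply: H; rewrite mem_index_enum.
Qed.

Lemma cauchy_schwarz (R : realType) (m : nat) (x y : 'cV[R]_m) :
  dot x y ^+ 2 <= sq x * sq y.
Proof.
have [y0|yn0] := eqVneq (sq y) 0.
  have -> : dot x y = 0.
    rewrite /dot big1 // => j _; by rewrite (sq_eq0 y0) mulr0.
  by rewrite expr0n /= mulr_ge0 // sq_ge0.
have yp : 0 < sq y by rewrite lt_neqAle eq_sym yn0 sq_ge0.
have := sq_ge0 (x + (- (dot x y / sq y)) *: y).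
rewrite sq_scale_add => H.
have : 0 <= sq x * sq y - dot x y ^+ 2.
  have -> : sq x * sq y - dot x y ^+ 2 =
    sq y * (sq x + 2 * - (dot x y / sq y) * dot x y + (- (dot x y / sq y)) ^+ 2 * sq y).
    by field; rewrite yn0.
  by rewrite mulr_ge0 // ltW.
by rewrite subr_ge0.
Qed.

Lemma dot_le (R : realType) (m : nat) (x y : 'cV[R]_m) : dot x y <= enorm x * enorm y.
Proof.
apply: (le_trans (ler_norm _)).
rewrite -(sqrtr_sqr (dot x y)) !enormE -sqrtrM ?sq_ge0 //.
by rewrite ler_sqrt ?mulr_ge0 ?sq_ge0 // cauchy_schwarz.
Qed.

Lemma enorm_triangle (R : realType) (m : nat) (x y : 'cV[R]_m) :
  enorm (x + y) <= enorm x + enorm y.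
Proof.
have e0 : 0 <= enorm x + enorm y by rewrite addr_ge0 // enorm_ge0.
rewrite -[X in _ <= X]ger0_norm // -sqrtr_sqr [enorm (x + y)]enormE.
rewrite ler_sqrt ?sqr_ge0 // sq_add sqrrD !enorm_sq.
have := dot_le x y; lra.
Qed.
Lemma trmx_cont (R : realType) (m n : nat) : continuous (fun A : 'M[R]_(m, n) => A^T).
Proof.
move=> A U /nbhs_ballP [e e0 eU]; apply/nbhs_ballP; exists e => // B [_ AB]; apply: eU; split => // i j; rewrite !mxE; exact: AB.
Qed.

Lemma cont_sum (T : topologicalType) (R : realType) (I : Type) (r : seq I) (P : pred I)
  (f : I -> T -> R) : (forall i, continuous (f i)) ->
  continuous (fun t => \sum_(i <- r | P i) f i t).
Proof.
move=> fc; elim: r => [|a r IH].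
  have -> : (fun t => \sum_(i <- [::] | P i) f i t) = (fun=> 0) by apply: funext => t; rewrite big_nil.
  exact: cst_continuous.
case Pa: (P a).
  have -> : (fun t => \sum_(i <- a :: r | P i) f i t) = (fun t => f a t + \sum_(i <- r | P i) f i t).
    by apply: funext => t; rewrite big_cons Pa.
  by move=> t; apply: continuousD; [exact: fc | exact: IH].
have -> : (fun t => \sum_(i <- a :: r | P i) f i t) = (fun t => \sum_(i <- r | P i) f i t).
  by apply: funext => t; rewrite big_cons Pa.
exact: IH.
Qed.

Lemma enorm_dist_cont (R : realType) (m : nat) (x : 'cV[R]_m) :
  continuous (fun y : 'cV[R]_m => enorm (x - y)).
Proof.
have -> : (fun y : 'cV[R]_m => enorm (x - y)) =
  Num.sqrt \o (fun y => \sum_(j < m) (fun j y => (x j 0 - y j 0) ^+ 2) j y).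
  by apply: funext => y /=; rewrite /enorm; congr Num.sqrt; apply: eq_bigr => j _; rewrite !mxE.
move=> y; apply: continuous_comp; last exact: sqrt_continuous.
apply: cont_sum => j z /=.
have -> : (fun y : 'cV[R]_m => (x j 0 - y j 0) ^+ 2) = (fun w : R => w ^+ 2) \o (fun y : 'cV[R]_m => x j 0 - y j 0) by [].
apply: continuous_comp; last exact: exprn_continuous.
apply: continuousB; first exact: cst_continuous.
exact: (@coord_continuous R m 1 j 0).
Qed.

Lemma enormN (R : realType) (m : nat) (x : 'cV[R]_m) : enorm (- x) = enorm x.
Proof. by rewrite !enormE /sq; congr Num.sqrt; apply: eq_bigr => j _; rewrite mxE sqrrN. Qed.

Lemma coord_le_enorm (R : realType) (m : nat) (x : 'cV[R]_m) j : `|x j 0| <= enorm x.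
Proof.
rewrite -sqrtr_sqr enormE ler_sqrt ?sq_ge0 //.
rewrite /sq (bigD1 j) //= lerDl; apply: sumr_ge0 => i _; exact: sqr_ge0.
Qed.

Lemma proj_exists (R : realType) (m : nat) (S : set 'cV[R]_m) (x : 'cV[R]_m) :
  closed S -> (exists y, S y) -> exists p, is_proj S x p.
Proof.
move=> cS [y0 Sy0].
set d := enorm (x - y0).
set K := [set y | S y /\ enorm (x - y) <= d].
have cK : closed K.
  apply: closedI => //.
  change (closed ((fun y => enorm (x - y)) @^-1` [set r | r <= d])).
  apply: preimage_closed; last exact: closed_le.
  by move=> z _; exact: enorm_dist_cont.
set K' := [set v : 'rV[R]_m | K (v^T)].
have cK' : closed K'.
  apply: (@preimage_closed _ _ (fun v : 'rV[R]_m => v^T) K) => //.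
  by move=> z _; exact: trmx_cont.
have bK' : bounded_set K'.
  rewrite /= /bounded_near; near=> M => v [Sv Hv].
  rewrite /= [`|v|]/Num.Def.normr /= mx_normrE; apply: bigmax_le.
    by near: M; apply: nbhs_pinfty_ge; rewrite num_real.
  move=> [i j] _ /=; rewrite (ord1 i).
  apply: (le_trans (_ : _ <= enorm (v^T))); first by have := coord_le_enorm (v^T) j; rewrite mxE.
  have -> : v^T = x - (x - v^T) by rewrite opprB addrC subrK.
  apply: (le_trans (enorm_triangle _ _)); rewrite enormN.
  have : enorm x + d <= M.
    by near: M; apply: nbhs_pinfty_ge; rewrite num_real.
  lra.
have coK' : compact K' by apply: bounded_closed_compact.
have coK : compact K.
  have -> : K = [set v^T | v in K'].
    apply/seteqP; split => y.
      by move=> Ky; exists y^T; rewrite /K' /= ?trmxK.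
    by move=> [v Kv <-].
  apply: continuous_compact => //.
  by apply: continuous_subspaceT => z; exact: trmx_cont.
have K0 : K !=set0 by exists y0; split => //; rewrite /d.
have [p pK pmin] := compact_EVT_min K0 coK (continuous_subspaceT (@enorm_dist_cont _ _ x)).
move: pK; rewrite inE => -[Sp Hp].
exists p; split => // y Sy.
have [Ky|nKy] := pselect (K y).
  by apply: pmin; rewrite inE.
have : ~ (enorm (x - y) <= d) by move=> H; apply: nKy.
move/negP; rewrite -ltNge => /ltW; exact: le_trans.
Unshelve. all: by end_near.
Qed.
Lemma proj_spec (R : realType) (m : nat) (S : set 'cV[R]_m) (x : 'cV[R]_m) :
  closed S -> (exists y, S y) -> is_proj S x (Defs.proj S x).
Proof. by move=> cS ne; apply: xgetPex; exact: proj_exists. Qed.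

Lemma proj_varineq (R : realType) (m : nat) (S : set 'cV[R]_m) (x p y : 'cV[R]_m) :
  convex_cv S -> is_proj S x p -> S y -> dot (x - p) (y - p) <= 0.
Proof.
move=> cvS [Sp pmin] Sy.
set D := dot (x - p) (y - p); set Q := sq (y - p).
rewrite leNgt; apply/negP => Dp.
have Q0 : 0 <= Q by exact: sq_ge0.
set l := D / (D + Q).
have DQ : 0 < D + Q by lra.
have l0 : 0 < l by rewrite divr_gt0.
have l1 : l <= 1 by rewrite ler_pdivrMr // mul1r; lra.
have lDQ : l * (D + Q) = D by rewrite /l mulfVK //; lra.
have := pmin _ (cvS _ _ _ Sy Sp (ltW l0) l1).
have -> : x - (l *: y + (1 - l) *: p) = (x - p) + (- l) *: (y - p).
  apply/matrixP => i j; rewrite !mxE; ring.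
move=> H.
have H2 : sq (x - p) <= sq ((x - p) + (- l) *: (y - p)).
  rewrite -!enorm_sq; have := enorm_ge0 (x - p); nra.
move: H2; rewrite sq_scale_add -/D -/Q => H2.
nra.
Qed.

Lemma setdist_le (R : realType) (m : nat) (S : set 'cV[R]_m) (x p : 'cV[R]_m) :
  S p -> setdist S x <= enorm (x - p).
Proof.
move=> Sp; rewrite /setdist; apply: ge_inf; last by exists p.
by exists 0 => r [y _ <-]; exact: enorm_ge0.
Qed.

Lemma setdist_ge0 (R : realType) (m : nat) (S : set 'cV[R]_m) (x : 'cV[R]_m) :
  (exists y, S y) -> 0 <= setdist S x.
Proof.
move=> [y Sy]; rewrite /setdist; apply: lb_le_inf.
  by exists (enorm (x - y)), y.
by move=> r [z _ <-]; exact: enorm_ge0.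
Qed.

Lemma setdist_lip (R : realType) (m : nat) (S : set 'cV[R]_m) (x z : 'cV[R]_m) :
  (exists y, S y) -> setdist S z <= enorm (z - x) + setdist S x.
Proof.
move=> [y0 Sy0].
rewrite -lerBlDl; rewrite {2}/setdist; apply: lb_le_inf.
  by exists (enorm (x - y0)), y0.
move=> r [y Sy <-]; rewrite lerBlDl.
apply: (le_trans (setdist_le z Sy)).
have -> : z - y = (z - x) + (x - y) by rewrite addrA subrK.
exact: enorm_triangle.
Qed.
Lemma nincr0 (R : realType) (F : R -> R) (u w : R) : u <= w ->
  {within `[u, w], continuous F} ->
  (forall t, u < t -> t < w -> derivable F t 1 /\ 'D_1 F t <= 0) -> F w <= F u.
Proof.
move=> uw cF dF.
have [uw'|] := ltP u w; last first.
  by move=> wu; have -> : w = u by apply/eqP; rewrite eq_le uw wu.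
have dF' : forall x, x \in `]u, w[ -> derivable F x 1 /\ 'D_1 F x <= 0.
  by move=> x; rewrite in_itv /= => /andP [a b]; exact: dF.
have [c cI E] := MVT uw' (fun x xI => @derivableP _ _ _ _ _ _ ((dF' x xI).1)) cF.
rewrite -subr_le0 E.
have := (dF' c cI).2; nra.
Qed.

Lemma nincr_fin (R : realType) (F : R -> R) (s : seq R) : forall u w, u <= w ->
  {within `[u, w], continuous F} ->
  (forall t, u < t -> t < w -> t \notin s -> derivable F t 1 /\ 'D_1 F t <= 0) ->
  F w <= F u.
Proof.
elim: s => [|e s IH] u w uw cF dF.
  by apply: nincr0 => // t ut tw; apply: dF.
have [/andP [ue ew]|nI] := boolP ((u < e) && (e < w)).
  apply: (@le_trans _ _ (F e)).
    apply: IH; first exact: ltW.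
      by apply: continuous_subspaceW cF; apply: subset_itv; rewrite bnd_simp ?lexx ?ltW.
    move=> t et tw ts; apply: dF => //; first exact: lt_trans et.
    by rewrite in_cons negb_or ts andbT; rewrite gt_eqF.
  apply: IH; first exact: ltW.
    by apply: continuous_subspaceW cF; apply: subset_itv; rewrite bnd_simp ?lexx ?ltW.
  move=> t ut te ts; apply: dF => //; first exact: lt_trans ew.
  by rewrite in_cons negb_or ts andbT; rewrite lt_eqF.
apply: IH => // t ut tw ts; apply: dF => //.
rewrite in_cons negb_or ts andbT; apply/eqP => te; move: nI; rewrite -te ut tw //.
Qed.
Lemma sqr_sum_le (R : realType) (N : nat) (x : 'I_N -> R) :
  (\sum_(i < N) x i) ^+ 2 <= N%:R * \sum_(i < N) x i ^+ 2.
Proof.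
rewrite expr2 mulr_suml.
under eq_bigr do rewrite mulr_sumr.
apply: (@le_trans _ _ (\sum_(i < N) \sum_(j < N) (x i ^+ 2 + x j ^+ 2) / 2)).
  apply: ler_sum => i _; apply: ler_sum => j _.
  have := sqr_ge0 (x i - x j); lra.
have E : forall i, \sum_(j < N) (x i ^+ 2 + x j ^+ 2) / 2 =
   (N%:R * x i ^+ 2 + \sum_(j < N) x j ^+ 2) / 2.
  move=> i; rewrite -mulr_suml big_split /= sumr_const card_ord mulr_natl //.
under eq_bigr do rewrite E.
rewrite -mulr_suml big_split /= sumr_const card_ord -mulr_sumr.
rewrite -mulr_natl; lra.
Qed.
Lemma key_sym (R : realType) (n m : nat) (F : 'I_n -> 'I_n -> R) (qq : 'I_n -> 'I_m -> R)
  (c : 'I_m -> R) : (forall i l, F i l = F l i) ->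
  let T := \sum_(i < n) \sum_(j < m) (\sum_(l < n) F i l * (qq i j - qq l j)) * (qq i j - c j) in
  T + T = \sum_(i < n) \sum_(l < n) \sum_(j < m) F i l * (qq i j - qq l j) ^+ 2.
Proof.
move=> Fs T.
have A : T = \sum_(i < n) \sum_(l < n) \sum_(j < m) F i l * (qq i j - qq l j) * (qq i j - c j).
  rewrite /T; apply: eq_bigr => i _; rewrite exchange_big /=; apply: eq_bigr => j _.
  by rewrite mulr_suml.
have B : T = \sum_(i < n) \sum_(l < n) \sum_(j < m) - (F i l * (qq i j - qq l j) * (qq l j - c j)).
  rewrite A exchange_big /=; apply: eq_bigr => i _; apply: eq_bigr => l _; apply: eq_bigr => j _.
  rewrite Fs; ring.
rewrite {1}A B -big_split /=; apply: eq_bigr => i _; rewrite -big_split /=.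
apply: eq_bigr => l _; rewrite -big_split /=; apply: eq_bigr => j _; ring.
Qed.

Lemma sum2_lin (R : realType) (n m : nat) (f1 f2 f3 : 'I_n -> 'I_m -> R) (a b : R) :
  \sum_(i < n) \sum_(j < m) (a * f1 i j + b * f2 i j - f3 i j) =
  a * \sum_(i < n) \sum_(j < m) f1 i j + b * \sum_(i < n) \sum_(j < m) f2 i j
  - \sum_(i < n) \sum_(j < m) f3 i j.
Proof.
rewrite !mulr_sumr -big_split -sumrB /=; apply: eq_bigr => i _.
by rewrite !mulr_sumr -big_split -sumrB.
Qed.

Lemma key (R : realType) (n m : nat) (k ah : R) (F : 'I_n -> 'I_n -> R)
  (v r qq : 'I_n -> 'I_m -> R) (c : 'I_m -> R) :
  (forall i l, F i l = F l i) -> (forall i l, 0 <= F i l /\ F i l <= ah) -> 0 <= ah ->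
  (forall i, \sum_(j < m) r i j ^+ 2 <= \sum_(j < m) r i j * (qq i j - c j)) ->
  3 + 4 * n%:R * ah <= k ->
  \sum_(i < n) \sum_(j < m)
     ((v i j + (qq i j - c j)) * (- (k * v i j + r i j + \sum_(l < n) F i l * (qq i j - qq l j)) + v i j)
      + (k - 1) * (qq i j - c j) * v i j)
   <= - (1/2) * (\sum_(i < n) \sum_(j < m) v i j ^+ 2 + \sum_(i < n) \sum_(j < m) r i j ^+ 2).
Proof.
move=> Fs Fb ah0 rI kb.
have n0 : 0 <= n%:R * ah :> R by rewrite mulr_ge0.
set s := fun i j => \sum_(l < n) F i l * (qq i j - qq l j).
set g := fun i j => r i j + s i j.
set e := fun i j => qq i j - c j.
set V := \sum_(i < n) \sum_(j < m) v i j ^+ 2.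
set Rr := \sum_(i < n) \sum_(j < m) r i j ^+ 2.
set G2 := \sum_(i < n) \sum_(j < m) g i j ^+ 2.
set C := \sum_(i < n) \sum_(j < m) g i j * e i j.
set T := \sum_(i < n) \sum_(j < m) s i j * e i j.
have k1 : 1 <= k - 1 by lra.
have step1 : \sum_(i < n) \sum_(j < m)
     ((v i j + (qq i j - c j)) * (- (k * v i j + r i j + s i j) + v i j)
      + (k - 1) * (qq i j - c j) * v i j)
   <= - ((k - 1) / 2) * V + (1 / (2 * (k - 1))) * G2 - C.
  rewrite /V /G2 /C -sum2_lin; apply: ler_sum => i _; apply: ler_sum => j _.
  rewrite /g /e.
  set x := v i j; set y := r i j + s i j.
  have kp : 0 < k - 1 by lra.
  have H : - ((k - 1) / 2) * x ^+ 2 - x * y - 1 / (2 * (k - 1)) * y ^+ 2 <= 0.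
    have -> : - ((k - 1) / 2) * x ^+ 2 - x * y - 1 / (2 * (k - 1)) * y ^+ 2 =
       - (((k - 1) * x + y) ^+ 2 / (2 * (k - 1))).
      by field; lra.
    rewrite oppr_le0 divr_ge0 ?sqr_ge0 //; lra.
  have -> : (x + (qq i j - c j)) * (- (k * x + r i j + s i j) + x) + (k - 1) * (qq i j - c j) * x
     = - (k - 1) * x ^+ 2 - x * y - y * (qq i j - c j) by rewrite /y; ring.
  lra.
have T2 := key_sym qq c Fs; rewrite -/s -/e in T2.
have T2' : T + T = \sum_(i < n) \sum_(l < n) \sum_(j < m) F i l * (qq i j - qq l j) ^+ 2.
  by rewrite -T2.
have T0 : 0 <= T.
  have : 0 <= T + T.
    rewrite T2'; apply: sumr_ge0 => i _; apply: sumr_ge0 => l _; apply: sumr_ge0 => j _.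
    by rewrite mulr_ge0 ?sqr_ge0 // (Fb i l).1.
  lra.
have CE : Rr + T <= C.
  have -> : C = \sum_(i < n) \sum_(j < m) r i j * e i j + T.
    rewrite /C /T -big_split /=; apply: eq_bigr => i _; rewrite -big_split /=.
    by apply: eq_bigr => j _; rewrite /g mulrDl.
  rewrite lerD2r; apply: ler_sum => i _; exact: rI.
have GE : G2 <= 2 * Rr + 4 * (n%:R * ah) * T.
  have E1 : G2 <= 2 * Rr + 2 * \sum_(i < n) \sum_(j < m) s i j ^+ 2.
    rewrite /G2 /Rr !mulr_sumr -big_split /=; apply: ler_sum => i _.
    rewrite !mulr_sumr -big_split /=; apply: ler_sum => j _.
    rewrite /g; have := sqr_ge0 (r i j - s i j); nra.
  have E2 : \sum_(i < n) \sum_(j < m) s i j ^+ 2 <=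
      n%:R * ah * \sum_(i < n) \sum_(l < n) \sum_(j < m) F i l * (qq i j - qq l j) ^+ 2.
    rewrite mulr_sumr; apply: ler_sum => i _.
    rewrite exchange_big /= mulr_sumr; apply: ler_sum => j _.
    apply: (le_trans (sqr_sum_le _)).
    rewrite -mulrA; apply: ler_wpM2l => //; rewrite mulr_sumr.
    apply: ler_sum => l _.
    have [F0 Fa] := Fb i l.
    have H := mulr_ge0 (mulr_ge0 (ltac:(lra) : 0 <= ah - F i l) F0) (sqr_ge0 (qq i j - qq l j)).
    rewrite exprMn; nra.
  rewrite -T2' in E2.
  lra.
have G2b : 1 / (2 * (k - 1)) * G2 <= (Rr + T) / 2.
  rewrite mul1r ler_pdivrMl; last lra.
  have := le_trans GE (_ : 2 * Rr + 4 * (n%:R * ah) * T <= (k - 1) * (Rr + T)).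
  have Rr0 : 0 <= Rr by apply: sumr_ge0 => i _; apply: sumr_ge0 => j _; exact: sqr_ge0.
  move=> H; have {H} := H ltac:(nra).
  have Rr0' : 0 <= Rr by [].
  nra.
have V0 : 0 <= V by apply: sumr_ge0 => i _; apply: sumr_ge0 => j _; exact: sqr_ge0.
apply: (le_trans step1).
nra.
Qed.
Lemma comp_derive (R : realType) m (f : R -> 'cV[R]_m) t j :
  derivable f t 1 -> is_derive t 1 (fun s => f s j 0) (('D_1 f t) j 0).
Proof. move=> df; rewrite derive_mx // mxE. apply: derivableP. by move/derivable_mxP: df. Qed.

Lemma is_derive_sum2 (R : realType) n m (h : 'I_n -> 'I_m -> R -> R) (dh : 'I_n -> 'I_m -> R) (t : R) :
  (forall i j, is_derive t 1 (h i j) (dh i j)) ->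
  is_derive t 1 (fun s => \sum_(i < n) \sum_(j < m) h i j s) (\sum_(i < n) \sum_(j < m) dh i j).
Proof.
move=> H.
have -> : (fun s => \sum_(i < n) \sum_(j < m) h i j s) = \sum_(i < n) (\sum_(j < m) h i j).
  by apply: funext => s; rewrite fct_sumE; apply: eq_bigr => i _; rewrite fct_sumE.
apply: is_derive_sum => i; exact: is_derive_sum.
Qed.

Lemma term_le_sum (R : realType) m (f : 'I_m -> R) j :
  (forall j, 0 <= f j) -> f j <= \sum_(j < m) f j.
Proof.
move=> f0; rewrite (bigD1 j) //= lerDl; apply: sumr_ge0 => *; exact: f0.
Qed.

Lemma term_le_sum2 (R : realType) n m (f : 'I_n -> 'I_m -> R) i j :
  (forall i j, 0 <= f i j) -> f i j <= \sum_(i < n) \sum_(j < m) f i j.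
Proof.
move=> f0; apply: (le_trans (term_le_sum (f := f i) j (fun j => f0 i j))).
apply: (term_le_sum (f := fun i => \sum_(j < m) f i j)) => i'; apply: sumr_ge0 => *; exact: f0.
Qed.

Lemma enorm_le_sum (R : realType) m (x : 'cV[R]_m) : enorm x <= \sum_(j < m) `|x j 0|.
Proof.
have S0 : 0 <= \sum_(j < m) `|x j 0| by apply: sumr_ge0.
rewrite -(ger0_norm S0) -sqrtr_sqr enormE ler_sqrt ?sqr_ge0 // /sq expr2 mulr_suml.
apply: ler_sum => j _.
rewrite -real_normK ?num_real // expr2 ler_wpM2l //.
exact: (term_le_sum (f := fun j => `|x j 0|)).
Qed.

Lemma sqrt_le1 (R : realType) (a : R) : 0 <= a -> Num.sqrt a <= 1 + a.
Proof.
move=> a0; have s0 := sqrtr_ge0 a.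
have : Num.sqrt a ^+ 2 = a by rewrite sqr_sqrtr.
nra.
Qed.

Lemma abs_le1 (R : realType) (x : R) : `|x| <= 1 + x ^+ 2.
Proof. rewrite -real_normK ?num_real //; have := normr_ge0 x; nra. Qed.

Lemma ts_fin (R : realType) (n : nat) (P : {set graph n}) (sigma : R -> graph n)
  (t0 taud : R) (ts : nat -> R) : switching_signal P sigma t0 taud ts -> 0 < taud ->
  forall w, exists s : seq R, forall l, ts l < w -> ts l \in s.
Proof.
move=> [_ _ dwell _ _] tp w.
have inc : forall l, ts 0%N + l%:R * taud <= ts l.
  elim=> [|l IH]; first by rewrite mul0r addr0.
  have := dwell l; rewrite -natr1 mulrDl mul1r; lra.
set N := (Num.trunc (`|w - ts 0%N| / taud)).+1.
exists (map ts (iota 0 N)) => l lw.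
apply: map_f; rewrite mem_iota add0n /=.
rewrite ltnNge; apply/negP => Nl.
have H1 := truncnS_gt (`|w - ts 0%N| / taud); rewrite -/N in H1.
have H2 : N%:R <= l%:R :> R by rewrite ler_nat.
have H3 : `|w - ts 0%N| < l%:R * taud.
  by rewrite -ltr_pdivrMr //; exact: lt_le_trans H1 H2.
have := inc l; have := ler_norm (w - ts 0%N); lra.
Qed.

Lemma ode_solve (R : realType) m (M C : 'M[R]_m) (D y r S : 'cV[R]_m) (k : R) :
  sym_posdef M ->
  M *m D + C *m y = C *m y - k *: (M *m y) - M *m r - M *m S ->
  D = - (k *: y + r + S).
Proof.
move=> [_ pd] H.
have E : M *m (D + (k *: y + r + S)) = 0.
  rewrite !mulmxDr -scalemxAr.
  apply/matrixP => a b; have := congr1 (fun A : 'cV[R]_m => A a b) H; rewrite /= !mxE => H'.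
  lra.
set z := D + (k *: y + r + S) in E.
have z0 : z = 0.
  apply/eqP; apply/negPn/negP => nz.
  have := pd z nz; rewrite -mulmxA E mulmx0 mxE ltxx //.
by apply/eqP; rewrite -addr_eq0; apply/eqP.
Qed.
Lemma conv_lemma (R : realType) (U Psi phi : R -> R) (T0 : R) :
  (forall t, T0 <= t -> 0 <= U t) ->
  (forall s t, T0 <= s -> s <= t -> U t <= U s) ->
  (forall s d eta, T0 <= s -> 0 < d -> (forall t, s <= t -> t <= s + d -> eta <= Psi t) ->
     U (s + d) <= U s - d * eta / 2) ->
  (forall eps, 0 < eps -> exists d eta, [/\ 0 < d, 0 < eta &
     forall s, T0 <= s -> eps <= phi s -> forall t, s <= t -> t <= s + d -> eta <= Psi t]) ->
  forall eps, 0 < eps -> \forall s \near +oo, phi s < eps.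
Proof.
move=> U0 Umon Udrop Hphi eps ep.
have [d [eta [d0 eta0 Hde]]] := Hphi eps ep.
set E := [set U t | t in [set t | T0 <= t]].
have hE : has_inf E.
  split; first by exists (U T0); exists T0 => //=.
  by exists 0 => x [t /= tT <-]; exact: U0.
have dp : 0 < d * eta / 2 by apply: divr_gt0 => //; exact: mulr_gt0.
have [_ [t1 /= t1T <-] t1L] := inf_adherent dp hE.
exists t1; split; first exact: num_real.
move=> s t1s; rewrite ltNge; apply/negP => phis.
have sT : T0 <= s by apply: (le_trans t1T); exact: ltW.
have H1 := Udrop s d eta sT d0 (Hde s sT phis).
have H2 := Umon t1 s t1T (ltW t1s).
have H3 : inf E <= U (s + d).
  apply: (ge_inf hE.2); exists (s + d) => //=; lra.
lra.
Qed.
Lemma cD (T : topologicalType) (R : realType) (f g : T -> R) :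
  continuous f -> continuous g -> continuous (fun t => f t + g t).
Proof. by move=> cf cg x; exact: (continuousD (cf x) (cg x)). Qed.
Lemma cM (T : topologicalType) (R : realType) (f g : T -> R) :
  continuous f -> continuous g -> continuous (fun t => f t * g t).
Proof. by move=> cf cg x; exact: (continuousM (cf x) (cg x)). Qed.
Lemma cB (T : topologicalType) (R : realType) (f g : T -> R) :
  continuous f -> continuous g -> continuous (fun t => f t - g t).
Proof. by move=> cf cg x; exact: (continuousB (cf x) (cg x)). Qed.
Lemma cC (T : topologicalType) (R : realType) (a : R) : continuous (fun _ : T => a).
Proof. exact: cst_continuous. Qed.
Lemma cX2 (T : topologicalType) (R : realType) (f : T -> R) :
  continuous f -> continuous (fun t => f t ^+ 2).
Proof.
move=> cf x.
have -> : (fun t => f t ^+ 2) = (fun w : R => w ^+ 2) \o f by [].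
apply: continuous_comp; [exact: cf | exact: exprn_continuous].
Qed.

Lemma Ucont (T : topologicalType) (R : realType) n m (k b : R)
  (Q V : 'I_n -> 'I_m -> T -> R) (c : 'I_m -> R) (lin : T -> R) :
  (forall i j, continuous (Q i j)) -> (forall i j, continuous (V i j)) -> continuous lin ->
  continuous (fun t => \sum_(i < n) \sum_(j < m)
     ((V i j t + (Q i j t - c j)) ^+ 2 / 2 + (k - 1) / 2 * (Q i j t - c j) ^+ 2) + b * lin t).
Proof.
move=> cQ cV cl.
apply: cD; last by apply: cM => //; exact: cC.
apply: (cont_sum (f := fun i t => \sum_(j < m)
   ((V i j t + (Q i j t - c j)) ^+ 2 / 2 + (k - 1) / 2 * (Q i j t - c j) ^+ 2))) => i.
apply: (cont_sum (f := fun j t =>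
   ((V i j t + (Q i j t - c j)) ^+ 2 / 2 + (k - 1) / 2 * (Q i j t - c j) ^+ 2))) => j.
apply: cD.
  apply: cM; last exact: cC.
  by apply: cX2; apply: cD => //; apply: cB => //; exact: cC.
apply: cM; first exact: cC.
by apply: cX2; apply: cB => //; exact: cC.
Qed.

Lemma coord_within (R : realType) m (A : set R) (f : R -> 'cV[R]_m) j :
  {within A, continuous f} -> {within A, continuous (fun t => f t j 0)}.
Proof.
move=> cf x.
have -> : (fun t => f t j 0) = (fun M : 'cV[R]_m => M j 0) \o f by [].
apply: (@continuous_comp (subspace A) _ _ f (fun M : 'cV[R]_m => M j 0) x); first exact: cf.
exact: coord_continuous.
Qed.

Lemma Uderiv (R : realType) n m (k b : R) (Q V : 'I_n -> 'I_m -> R -> R)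
  (dQ dV : 'I_n -> 'I_m -> R) (c : 'I_m -> R) (t : R) :
  (forall i j, is_derive t 1 (Q i j) (dQ i j)) -> (forall i j, is_derive t 1 (V i j) (dV i j)) ->
  is_derive t 1 (fun s => \sum_(i < n) \sum_(j < m)
     ((V i j s + (Q i j s - c j)) ^+ 2 / 2 + (k - 1) / 2 * (Q i j s - c j) ^+ 2) + b * s)
   (\sum_(i < n) \sum_(j < m) ((V i j t + (Q i j t - c j)) * (dV i j + dQ i j)
       + (k - 1) * (Q i j t - c j) * dQ i j) + b).
Proof.
move=> HQ HV.
have Hs : is_derive t 1 (fun s => \sum_(i < n) \sum_(j < m)
     ((V i j s + (Q i j s - c j)) ^+ 2 / 2 + (k - 1) / 2 * (Q i j s - c j) ^+ 2))
   (\sum_(i < n) \sum_(j < m) ((V i j t + (Q i j t - c j)) * (dV i j + dQ i j)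
       + (k - 1) * (Q i j t - c j) * dQ i j)).
  apply: (is_derive_sum2 (h := fun i j s => (V i j s + (Q i j s - c j)) ^+ 2 / 2 + (k - 1) / 2 * (Q i j s - c j) ^+ 2)) => i j.
  have H1 := HQ i j; have H2 := HV i j.
  apply: is_derive_eq.
  rewrite !scaler0 !subr0 /GRing.scale /=. by field.
have Hl : is_derive t 1 (fun s : R => b * s) b.
  apply: is_derive_eq. by rewrite /GRing.scale /= mulr1.
apply: is_derive_eq. by rewrite /GRing.scale /=.
Qed.
Lemma cId (T : topologicalType) : continuous (fun x : T => x).
Proof. by move=> x. Qed.

Lemma lip_fin (R : realType) (f : R -> R) (s : seq R) (u w K : R) : u <= w ->
  {within `[u, w], continuous f} ->
  (forall t, u < t -> t < w -> t \notin s -> exists df, is_derive t 1 f df /\ `|df| <= K) ->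
  `|f w - f u| <= K * (w - u).
Proof.
move=> uw cf df.
have cl : {within `[u, w], continuous (fun x : R => K * x)}.
  by apply: continuous_subspaceT; apply: cM; [exact: cC | exact: cId].
rewrite ler_norml; apply/andP; split.
  have := @nincr_fin R (fun x => 0 - f x - K * x) s u w uw
    (cB (cB (@cC (subspace `[u, w]) R 0) cf) cl).
  have H : forall t, u < t -> t < w -> t \notin s ->
      derivable (fun x => 0 - f x - K * x) t 1 /\ 'D_1 (fun x => 0 - f x - K * x) t <= 0.
    move=> t ut tw ts; have [d [Hd dK]] := df t ut tw ts.
    have Hl : is_derive t 1 (fun s : R => 0 - f s - K * s) (0 - d - K).
      apply: is_derive_eq; rewrite /GRing.scale /=; ring.
    split; first exact: ex_derive.
    rewrite derive_val; move: dK; rewrite ler_norml; lra.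
  move/(_ H); lra.
have := @nincr_fin R (fun x => f x - K * x) s u w uw (cB cf cl).
have H : forall t, u < t -> t < w -> t \notin s ->
    derivable (fun x => f x - K * x) t 1 /\ 'D_1 (fun x => f x - K * x) t <= 0.
  move=> t ut tw ts; have [d [Hd dK]] := df t ut tw ts.
  have Hl : is_derive t 1 (fun s : R => f s - K * s) (d - K).
    apply: is_derive_eq; rewrite /GRing.scale /=; ring.
  split; first exact: ex_derive.
  rewrite derive_val; move: dK; rewrite ler_norml; lra.
move/(_ H); lra.
Qed.
Theorem proposition1 (R : realType) (n m : nat)
    (M : 'I_n -> 'cV[R]_m -> 'M[R]_m)
    (C : 'I_n -> 'cV[R]_m -> 'cV[R]_m -> 'M[R]_m)
    (X : 'I_n -> set 'cV[R]_m)
    (P : {set graph n}) (sigma : R -> graph n) (t0 taud : R) (ts : nat -> R)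
    (a : 'I_n -> 'I_n -> R -> R) (alow ahigh : R) :
  (forall i x, sym_posdef (M i x)) ->
  (forall i, closed (X i)) ->
  (forall i, convex_cv (X i)) ->
  (exists x, forall i, X i x) ->
  ebounded [set x | forall i, X i x] ->
  (forall G, G \in P -> undirected G) ->
  0 < taud ->
  switching_signal P sigma t0 taud ts ->
  (forall i j, {within [set t | t0 <= t], continuous (a i j)}) ->
  (forall i j t, a i j t = a j i t) ->
  0 < alow -> 0 < ahigh ->
  (forall i j t, 0 <= t -> alow <= a i j t /\ a i j t <= ahigh) ->
  exists kbar : R, forall k : R, 0 < k -> kbar < k ->
  forall q qd : 'I_n -> R -> 'cV[R]_m,
    (forall i, {within [set t | t0 <= t], continuous (q i)}) ->
    (forall i, {within [set t | t0 <= t], continuous (qd i)}) ->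
    (forall i t, t0 < t -> derivable (q i) t 1 /\ 'D_1 (q i) t = qd i t) ->
    (forall i t, t0 < t -> (forall l, t != ts l) ->
       derivable (qd i) t 1 /\
       M i (q i t) *m 'D_1 (qd i) t + C i (q i t) (qd i t) *m qd i t
         = control M C X sigma a k q qd i t) ->
    forall i,
      (setdist (X i) (q i t) @[t --> +oo] --> 0) /\
      (qd i t @[t --> +oo] --> (0 : 'cV[R]_m)).
Proof.
move=> HM Hcl Hcv [xs Hxs] Hbd Hund Htaud Hsw Hac Has Halow Hahigh Hab.
exists (3 + 4 * n%:R * ahigh) => k k0 kk q qd Hqc Hqdc Hqd Hode i0.
have kb : 3 + 4 * n%:R * ahigh <= k by exact: ltW.
have nah : 0 <= 4 * n%:R * ahigh by rewrite !mulr_ge0 // ltW.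
have k1 : 2 <= k - 1 by lra.
have Ne : forall i, exists y, X i y by move=> i; exists xs.
pose Pj := fun i x => Defs.proj (X i) x.
have Pspec : forall i x, is_proj (X i) x (Pj i x) by move=> i x; apply: proj_spec.
pose T0 := Num.max t0 0 + 1.
have T0t0 : t0 < T0.
  have : t0 <= Num.max t0 0 by rewrite le_max lexx.
  rewrite /T0; lra.
have T00 : 0 < T0.
  have : 0 <= Num.max t0 0 by rewrite le_max lexx orbT.
  rewrite /T0; lra.
pose c := fun j : 'I_m => xs j 0.
pose F := fun t i l => if (i, l) \in sigma t then a i l t else 0.
pose r := fun i j t => q i t j 0 - Pj i (q i t) j 0.
pose Psi := fun t => \sum_(i < n) \sum_(j < m) qd i t j 0 ^+ 2 + \sum_(i < n) \sum_(j < m) r i j t ^+ 2.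
pose Uf := fun b t => \sum_(i < n) \sum_(j < m)
     ((qd i t j 0 + (q i t j 0 - c j)) ^+ 2 / 2 + (k - 1) / 2 * (q i t j 0 - c j) ^+ 2) + b * t.
have ode : forall i j t, t0 < t -> (forall l, t != ts l) ->
   is_derive t 1 (fun s => qd i s j 0)
     (- (k * qd i t j 0 + r i j t + \sum_(l < n) F t i l * (q i t j 0 - q l t j 0))).
  move=> i j t tt nots.
  have [dq Heq] := Hode i t tt nots.
  rewrite /control in Heq.
  have D := ode_solve (HM i (q i t)) Heq.
  apply: (is_derive_eq (comp_derive j dq)).
  rewrite D !mxE summxE.
  congr (- (_ + _ + _)).
  rewrite big_mkcond /=; apply: eq_bigr => l _.
  rewrite /F /neighbors inE; case: ((i, l) \in sigma t) => /=; last by rewrite mul0r.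
  by rewrite !mxE.

have dU : forall b t, t0 < t -> 0 <= t -> (forall l, t != ts l) ->
    derivable (Uf b) t 1 /\ 'D_1 (Uf b) t <= - (1/2) * Psi t + b.
  move=> b t tt t0' nots.
  have HQ : forall i j, is_derive t 1 (fun s => q i s j 0) (qd i t j 0).
    move=> i j; have [dq E] := Hqd i t tt; rewrite -E; exact: comp_derive.
  have HV := fun i j => ode i j t tt nots.
  have HU : is_derive t 1 (Uf b) _ := Uderiv k b c HQ HV.
  split; first exact: ex_derive.
  rewrite derive_val lerD2r.
  have Gu : undirected (sigma t) by apply: Hund; case: Hsw => _ _ _ _ -> //; exact: ltW.
  apply: (key (ah := ahigh)) => //.
  - move=> i l; rewrite /F; case: Gu => -> _; case: ((l, i) \in sigma t) => //.
  - move=> i l; rewrite /F; case: ((i, l) \in sigma t); last by rewrite lexx ltW.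
    by have [h1 h2] := Hab i l t t0'; split => //; lra.
  - exact: ltW.
  - move=> i; have H := proj_varineq (Hcv i) (Pspec i (q i t)) (Hxs i).
    rewrite /dot in H; rewrite -subr_ge0 -sumrB.
    have -> : \sum_(i1 < m) (r i i1 t * (q i t i1 0 - c i1) - r i i1 t ^+ 2) =
      - \sum_(j < m) (q i t - Pj i (q i t)) j 0 * (xs - Pj i (q i t)) j 0.
      rewrite -sumrN; apply: eq_bigr => j _; rewrite !mxE /r /c; ring.
    by rewrite oppr_ge0.
have mono : forall b u w, T0 <= u -> u <= w ->
    (forall t, u < t -> t < w -> - (1/2) * Psi t + b <= 0) -> Uf b w <= Uf b u.
  move=> b u w Tu uw Hn.
  have [s Hs] := ts_fin Hsw Htaud w.
  have sub : `[u, w] `<=` [set t | t0 <= t].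
    move=> x; rewrite /= in_itv /= => /andP [ux _]; lra.
  apply: (nincr_fin (s := s)) => //.
    rewrite /Uf; apply: Ucont => [i j|i j|]; last exact: (continuous_subspaceT (@cId R)).
      by apply: coord_within; exact: continuous_subspaceW sub (Hqc i).
    by apply: coord_within; exact: continuous_subspaceW sub (Hqdc i).
  move=> t ut tw tns.
  have nots : forall l, t != ts l.
    move=> l; apply/eqP => E; move: tns; rewrite E Hs //; rewrite -E //.
  have [d1 d2] := dU b t (ltac:(lra)) (ltac:(lra)) nots.
  split => //; apply: (le_trans d2); exact: Hn.
have Psi0 : forall t, 0 <= Psi t.
  move=> t; apply: addr_ge0; apply: sumr_ge0 => i _; apply: sumr_ge0 => j _; exact: sqr_ge0.
have Umon : forall s t, T0 <= s -> s <= t -> Uf 0 t <= Uf 0 s.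
  move=> s t Ts st; apply: mono => // x _ _; have := Psi0 x; lra.
have Udrop : forall s d eta, T0 <= s -> 0 < d ->
    (forall t, s <= t -> t <= s + d -> eta <= Psi t) -> Uf 0 (s + d) <= Uf 0 s - d * eta / 2.
  move=> s d eta Ts d0 He.
  have := mono (eta / 2) s (s + d) Ts (ltac:(lra)).
  have H : forall t, s < t -> t < s + d -> - (1/2) * Psi t + eta / 2 <= 0.
    by move=> t st tsd; have := He t (ltW st) (ltW tsd); lra.
  move/(_ H); rewrite /Uf !mul0r !addr0; lra.
have U0 : forall t, 0 <= Uf 0 t.
  move=> t; rewrite /Uf mul0r addr0; apply: sumr_ge0 => i _; apply: sumr_ge0 => j _.
  apply: addr_ge0; first by apply: divr_ge0 => //; exact: sqr_ge0.
  by apply: mulr_ge0; [lra | exact: sqr_ge0].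
pose U0v := Uf 0 T0.
pose B := 1 + 6 * U0v.
have bnd : forall i j t, T0 <= t -> `|qd i t j 0| <= B /\ `|q i t j 0 - c j| <= B.
  move=> i j t Tt.
  have Ut := Umon T0 t (lexx _) Tt.
  pose f := fun i j => (qd i t j 0 + (q i t j 0 - c j)) ^+ 2 / 2 + (k - 1) / 2 * (q i t j 0 - c j) ^+ 2.
  have f0 : forall i j, 0 <= f i j.
    move=> i' j'; apply: addr_ge0; first by apply: divr_ge0 => //; exact: sqr_ge0.
    by apply: mulr_ge0; [lra | exact: sqr_ge0].
  have fle : f i j <= U0v.
    apply: le_trans Ut; rewrite /Uf mul0r addr0; exact: (term_le_sum2 i j f0).
  have e2 := sqr_ge0 (q i t j 0 - c j).
  have ve2 := sqr_ge0 (qd i t j 0 + (q i t j 0 - c j)).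
  have h1 : (q i t j 0 - c j) ^+ 2 <= U0v by move: fle; rewrite /f; nra.
  have h2 : (qd i t j 0 + (q i t j 0 - c j)) ^+ 2 <= 2 * U0v by move: fle; rewrite /f; nra.
  have h3 : qd i t j 0 ^+ 2 <= 6 * U0v.
    have := sqr_ge0 (qd i t j 0 + 2 * (q i t j 0 - c j)); nra.
  split.
    apply: (le_trans (abs_le1 _)); rewrite /B; lra.
  apply: (le_trans (abs_le1 _)); rewrite /B; lra.
have B0 : 0 <= B by have := U0 T0; rewrite /B /U0v; lra.
have rbnd : forall i j t, T0 <= t -> `|r i j t| <= m%:R * B.
  move=> i j t Tt.
  have H1 : `|q i t j 0 - Pj i (q i t) j 0| <= enorm (q i t - Pj i (q i t)).
    have E : (q i t - Pj i (q i t)) j 0 = q i t j 0 - Pj i (q i t) j 0 by rewrite !mxE.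
    by rewrite -E; exact: coord_le_enorm.
  rewrite /r; apply: (le_trans H1); apply: (le_trans ((Pspec i (q i t)).2 xs (Hxs i))).
  apply: (le_trans (enorm_le_sum _)).
  have -> : m%:R * B = \sum_(j < m) B by rewrite sumr_const card_ord mulr_natl.
  apply: ler_sum => j' _; rewrite !mxE.
  exact: (bnd i j' t Tt).2.
have sbnd : forall i j t, T0 <= t ->
    `|\sum_(l < n) F t i l * (q i t j 0 - q l t j 0)| <= n%:R * (ahigh * (2 * B)).
  move=> i j t Tt.
  apply: (le_trans (ler_norm_sum _ _ _)).
  have -> : n%:R * (ahigh * (2 * B)) = \sum_(l < n) (ahigh * (2 * B)) by rewrite sumr_const card_ord mulr_natl.
  apply: ler_sum => l _.
  rewrite normrM.
  have Fb : `|F t i l| <= ahigh.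
    rewrite /F; case: ((i, l) \in sigma t); last by rewrite normr0 ltW.
    have [h1 h2] := Hab i l t (ltac:(lra)); rewrite ger0_norm //; lra.
  have db : `|q i t j 0 - q l t j 0| <= 2 * B.
    have -> : q i t j 0 - q l t j 0 = (q i t j 0 - c j) - (q l t j 0 - c j) by ring.
    apply: (le_trans (ler_normB _ _)).
    have := (bnd i j t Tt).2; have := (bnd l j t Tt).2; lra.
  apply: ler_pM => //; exact: normr_ge0.
pose Bw := k * B + m%:R * B + n%:R * (ahigh * (2 * B)).
have wbnd : forall i j t, T0 <= t ->
    `|- (k * qd i t j 0 + r i j t + \sum_(l < n) F t i l * (q i t j 0 - q l t j 0))| <= Bw.
  move=> i j t Tt; rewrite normrN.
  apply: (le_trans (ler_normD _ _)).
  have := sbnd i j t Tt; have := rbnd i j t Tt; have := (bnd i j t Tt).1.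
  have := ler_normD (k * qd i t j 0) (r i j t); rewrite normrM (gtr0_norm k0).
  rewrite /Bw; nra.
have vlip : forall i j s t, T0 <= s -> s <= t -> `|qd i t j 0 - qd i s j 0| <= Bw * (t - s).
  move=> i j s t Ts st.
  have [ls Hls] := ts_fin Hsw Htaud t.
  have sub : `[s, t] `<=` [set x | t0 <= x].
    move=> x; rewrite /= in_itv /= => /andP [ux _]; lra.
  apply: (lip_fin (f := fun x => qd i x j 0) (s := ls)) => //.
    by apply: coord_within; exact: continuous_subspaceW sub (Hqdc i).
  move=> x sx xt xns.
  have nots : forall l, x != ts l.
    move=> l; apply/eqP => E; move: xns; rewrite E Hls //; rewrite -E //.
  eexists; split; first exact: (ode i j x (ltac:(lra)) nots).
  apply: wbnd; lra.
have qlip : forall i j s t, T0 <= s -> s <= t -> `|q i t j 0 - q i s j 0| <= B * (t - s).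
  move=> i j s t Ts st.
  have sub : `[s, t] `<=` [set x | t0 <= x].
    move=> x; rewrite /= in_itv /= => /andP [ux _]; lra.
  apply: (lip_fin (f := fun x => q i x j 0) (s := [::])) => //.
    by apply: coord_within; exact: continuous_subspaceW sub (Hqc i).
  move=> x sx xt _.
  have [dq E] := Hqd i x (ltac:(lra)).
  exists (qd i x j 0); split; first by rewrite -E; exact: comp_derive.
  have Tx : T0 <= x by lra.
  exact: (bnd i j x Tx).1.
have U0' : forall t, T0 <= t -> 0 <= Uf 0 t by move=> t _; exact: U0.
split.
  apply/cvgr0Pnorm_lt => eps ep.
  have Hphi : forall eps, 0 < eps -> exists d eta, [/\ 0 < d, 0 < eta &
     forall s, T0 <= s -> eps <= setdist (X i0) (q i0 s) ->
       forall t, s <= t -> t <= s + d -> eta <= Psi t].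
    move=> e e0.
    have mB0 : 0 < m%:R * B + 1 by have := ler0n R m; nra.
    exists (e / (2 * (m%:R * B + 1))), (e ^+ 2 / 4); split.
    - by apply: divr_gt0 => //; lra.
    - by apply: divr_gt0 => //; exact: exprn_gt0.
    move=> s Ts es t st tsd.
    set d := e / (2 * (m%:R * B + 1)) in tsd.
    have dE : d * (2 * (m%:R * B + 1)) = e by rewrite /d mulfVK //; lra.
    have d0 : 0 <= d by rewrite /d; apply: divr_ge0; lra.
    have H1 := setdist_lip (q i0 t) (q i0 s) (Ne i0).
    have H2 : enorm (q i0 s - q i0 t) <= m%:R * B * (t - s).
      apply: (le_trans (enorm_le_sum _)).
      have -> : m%:R * B * (t - s) = \sum_(j < m) (B * (t - s)).
        by rewrite sumr_const card_ord -mulrA mulr_natl.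
      apply: ler_sum => j _; rewrite !mxE distrC; exact: qlip.
    have H3 : m%:R * B * (t - s) <= e / 2.
      have : m%:R * B * (t - s) <= m%:R * B * d by apply: ler_wpM2l; [exact: mulr_ge0 | lra].
      have : 0 <= m%:R * B by exact: mulr_ge0.
      nra.
    have H4 : e / 2 <= setdist (X i0) (q i0 t) by lra.
    have H5 : setdist (X i0) (q i0 t) <= enorm (q i0 t - Pj i0 (q i0 t)).
      exact: setdist_le (Pspec i0 (q i0 t)).1.
    have H6 : enorm (q i0 t - Pj i0 (q i0 t)) ^+ 2 <= Psi t.
      rewrite enorm_sq /sq /Psi.
      have A1 : \sum_(j < m) (q i0 t - Pj i0 (q i0 t)) j 0 ^+ 2 = \sum_(j < m) r i0 j t ^+ 2.
        by apply: eq_bigr => j _; rewrite !mxE.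
      have A2 : \sum_(j < m) r i0 j t ^+ 2 <= \sum_(i < n) \sum_(j < m) r i j t ^+ 2.
        apply: (term_le_sum (f := fun i => \sum_(j < m) r i j t ^+ 2) i0).
        by move=> i; apply: sumr_ge0 => j _; exact: sqr_ge0.
      have A3 : 0 <= \sum_(i < n) \sum_(j < m) qd i t j 0 ^+ 2.
        by apply: sumr_ge0 => i _; apply: sumr_ge0 => j _; exact: sqr_ge0.
      rewrite A1; lra.
    have e20 : 0 <= e / 2 by lra.
    apply: le_trans H6.
    have : (e / 2) ^+ 2 <= enorm (q i0 t - Pj i0 (q i0 t)) ^+ 2.
      have := enorm_ge0 (q i0 t - Pj i0 (q i0 t)); nra.
    have -> : e ^+ 2 / 4 = (e / 2) ^+ 2 by field.
    done.
  have := conv_lemma U0' Umon Udrop Hphi ep.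
  apply: filterS => s Hs.
  rewrite ger0_norm //; exact: setdist_ge0.
apply/cvgr0Pnorm_lt => eps ep.
have Hphi : forall j, forall eps, 0 < eps -> exists d eta, [/\ 0 < d, 0 < eta &
   forall s, T0 <= s -> eps <= `|qd i0 s j 0| ->
     forall t, s <= t -> t <= s + d -> eta <= Psi t].
  move=> j e e0.
  have Bw0 : 0 <= Bw by have := wbnd i0 j T0 (lexx _); have := normr_ge0 (- (k * qd i0 T0 j 0 + r i0 j T0 + \sum_(l < n) F T0 i0 l * (q i0 T0 j 0 - q l T0 j 0))); lra.
  exists (e / (2 * (Bw + 1))), (e ^+ 2 / 4); split.
  - by apply: divr_gt0 => //; lra.
  - by apply: divr_gt0 => //; exact: exprn_gt0.
  move=> s Ts es t st tsd.
  set d := e / (2 * (Bw + 1)) in tsd.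
  have dE : d * (2 * (Bw + 1)) = e by rewrite /d mulfVK //; lra.
  have d0 : 0 <= d by rewrite /d; apply: divr_ge0; lra.
  have H1 := vlip i0 j s t Ts st.
  have H2 : Bw * (t - s) <= e / 2.
    have : Bw * (t - s) <= Bw * d by apply: ler_wpM2l => //; lra.
    nra.
  have H3 : e / 2 <= `|qd i0 t j 0|.
    have := ler_distD (qd i0 t j 0) (qd i0 s j 0) 0; rewrite !subr0 distrC; lra.
  have H6 : qd i0 t j 0 ^+ 2 <= Psi t.
    rewrite /Psi.
    have A1 : qd i0 t j 0 ^+ 2 <= \sum_(i < n) \sum_(j < m) qd i t j 0 ^+ 2.
      by apply: (term_le_sum2 (f := fun i j => qd i t j 0 ^+ 2)) => i' j'; exact: sqr_ge0.
    have A2 : 0 <= \sum_(i < n) \sum_(j < m) r i j t ^+ 2.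
      by apply: sumr_ge0 => i _; apply: sumr_ge0 => j' _; exact: sqr_ge0.
    lra.
  apply: le_trans H6.
  have Hn : `|qd i0 t j 0| ^+ 2 = qd i0 t j 0 ^+ 2 by rewrite real_normK ?num_real.
  have : 0 <= e / 2 by lra.
  nra.
have : \forall s \near +oo, forall j : 'I_m, `|qd i0 s j 0| < eps.
  by apply: filter_forall => j; exact: (conv_lemma U0' Umon Udrop (Hphi j) ep).
apply: filterS => s Hs.
rewrite [`|_|]/Num.Def.normr /= mx_normrE.
apply: bigmax_lt => // -[a1 b1] _ /=.
rewrite (ord1 b1); exact: Hs.
Qed.
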